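(* Let $(V,E)$ be a finite graph and $p\in[0,1]$. Define rates on $\{0,1\}^E\times\{-1,1\}^V$ as follows: if there exists $x\in V$ such that $\sigma'=\sigma^x$ and $\eta'(e)=\eta(e)$ for all $e\in E\setminus E_x$, then $c((\eta,\sigma),(\eta',\sigma'))=(1-p)^{|\{e\in E_x:\eta'(e)=0\}|}p^{|\{e\in E_x:\eta'(e)=1\}|}\mathbf 1_{(\eta',\sigma')\in\mathcal C_x}$; otherwise, for $(\eta,\sigma)\ne(\eta',\sigma')$, the rate is $0$; and $c((\eta,\sigma),(\eta,\sigma))=-\sum_{(\eta',\sigma')\ne(\eta,\sigma)}c((\eta,\sigma),(\eta',\sigma'))$. Then for any $\eta\in\{0,1\}^E$ and $\sigma,\sigma'\in\{-1,1\}^V$, the sum $\sum_{\eta'\in\{0,1\}^E}c((\eta,\sigma),(\eta',\sigma'))$ does not depend on $\eta$ and equals $$c(\sigma,\sigma')=\begin{cases}(1-p)^{|\{e\in E_x:\delta_\sigma(e)=1\}|}&\text{if }\sigma'=\sigma^x,\\ -\sum_{x\in V}(1-p)^{|\{e\in E_x:\delta_\sigma(e)=1\}|}&\text{if }\sigma'=\sigma,\\ 0&\text{otherwise.}\end{cases}$$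
   Context: Edge configurations $\eta\in\{0,1\}^E$, spin configurations $\sigma\in\{-1,1\}^V$. For $e=\langle x,y\rangle$, $\delta_\sigma(e)=\mathbf 1_{\sigma(x)=\sigma(y)}$. $E_x$ is the set of edges with endvertex $x$; $\sigma^x$ is $\sigma$ with the spin at $x$ flipped. $\mathcal C_x=\{(\eta,\sigma):\eta(e)\le\delta_\sigma(e)\text{ for all }e\in E_x\}$. *)

(* Defs.v *)
From HB Require Import structures.
From mathcomp Require Import all_boot all_order all_algebra.
Set Implicit Arguments. Unset Strict Implicit. Unset Printing Implicit Defensive.
Import Order.TTheory GRing.Theory Num.Theory.
Local Open Scope ring_scope.

(* Spins in {-1,1} are encoded as booleans (true = +1, false = -1);
   only equality of spins and spin flips are used. *)
Section Defs.
Variables (R : pzRingType) (V E : finType) (src tgt : E -> V).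

Definition econf := {ffun E -> bool}.
Definition sconf := {ffun V -> bool}.

Definition incident (x : V) (e : E) : bool := (src e == x) || (tgt e == x).

Definition delta (s : sconf) (e : E) : bool := s (src e) == s (tgt e).

Definition flip (s : sconf) (x : V) : sconf :=
  [ffun y => if y == x then ~~ s y else s y].

(* (eta, sigma) \in C_x ; eta(e) <= delta(e) on {0,1} is implication *)
Definition inC (x : V) (eta : econf) (s : sconf) : bool :=
  [forall e, incident x e ==> (eta e ==> delta s e)].

Definition rate_off (p : R) (eta : econf) (s : sconf) (eta' : econf) (s' : sconf) : R :=
  match [pick x | (s' == flip s x) &&
                  [forall e, ~~ incident x e ==> (eta' e == eta e)]] with
  | Some x =>
      (1 - p) ^+ #|[set e | incident x e & ~~ eta' e]|
      * p ^+ #|[set e | incident x e & eta' e]|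
      * (inC x eta' s')%:R
  | None => 0
  end.

Definition rate (p : R) (st st' : econf * sconf) : R :=
  if st' == st then
    - \sum_(st'' : econf * sconf | st'' != st) rate_off p st.1 st.2 st''.1 st''.2
  else rate_off p st.1 st.2 st'.1 st'.2.

Definition cspin (p : R) (s s' : sconf) : R :=
  match [pick x | s' == flip s x] with
  | Some x => (1 - p) ^+ #|[set e | incident x e & delta s e]|
  | None =>
      if s' == s then
        - \sum_(x : V) (1 - p) ^+ #|[set e | incident x e & delta s e]|
      else 0
  end.
End Defs.

(* Main.v *)
Require Import Defs.
From HB Require Import structures.
From mathcomp Require Import all_boot all_order all_algebra.
Import Order.TTheory GRing.Theory Num.Theory.
Local Open Scope ring_scope.

Section Proof.
Variables (R : realFieldType) (V E : finType) (src tgt : E -> V).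
Hypothesis no_loops : forall e : E, src e != tgt e.
Variable p : R.

Lemma flip_inj (s : sconf V) x y : flip s x = flip s y -> x = y.
Proof.
move=> /(congr1 (fun f : sconf V => f x)); rewrite !ffunE eqxx.
case: eqVneq => // _; by case: (s x).
Qed.

Lemma flip_neq (s : sconf V) x : (flip s x == s) = false.
Proof.
apply/eqP => /(congr1 (fun f : sconf V => f x)); rewrite ffunE eqxx; by case: (s x).
Qed.

Lemma delta_flip (s : sconf V) x e : incident src tgt x e ->
  delta src tgt (flip s x) e = ~~ delta src tgt s e.
Proof.
rewrite /incident /delta !ffunE => /orP[] /eqP Hx.
  have := no_loops e; rewrite Hx eqxx eq_sym => /negbTE ->.
  by case: (s x); case: (s (tgt e)).
have := no_loops e; rewrite Hx eqxx => /negbTE ->.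
by case: (s x); case: (s (src e)).
Qed.

Lemma prod_ind (I : finType) (P : pred I) (b : I -> bool) :
  \prod_(i | P i) ((b i)%:R : R) = ([forall i, P i ==> b i])%:R.
Proof.
case: forallP => [H | H].
  by apply: big1 => i Pi; have := H i; rewrite Pi /= => ->.
have [i Hi] : exists i, ~~ (P i ==> b i).
  apply/existsP; apply/negP => /existsP H2; apply: H => i; apply/negPn/negP => Hn.
  by apply: H2; exists i.
move: Hi; rewrite negb_imply => /andP[Pi bi].
by rewrite (bigD1 i) //= (negbTE bi) mul0r.
Qed.

Definition agree x (eta eta' : econf E) :=
  [forall e, ~~ incident src tgt x e ==> (eta' e == eta e)].

Definition W (x : V) (s' : sconf V) (eta' : econf E) : R :=
      (1 - p) ^+ #|[set e | incident src tgt x e & ~~ eta' e]|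
      * p ^+ #|[set e | incident src tgt x e & eta' e]|
      * (inC src tgt x eta' s')%:R.

Lemma rate_off_flip eta (s : sconf V) x eta' :
  rate_off src tgt p eta s eta' (flip s x) =
  if agree x eta eta' then W x (flip s x) eta' else 0.
Proof.
rewrite /rate_off; case: pickP => [y /andP[/eqP /flip_inj <- Ha] | H].
  by rewrite /agree Ha.
have := H x; rewrite eqxx /= /agree => ->; done.
Qed.

Lemma rate_off_nonflip eta (s s' : sconf V) eta' :
  (forall x, s' != flip s x) -> rate_off src tgt p eta s eta' s' = 0.
Proof.
move=> H; rewrite /rate_off; case: pickP => [y /andP[Hy _] | //].
by have := H y; rewrite Hy.
Qed.

Lemma L eta (s : sconf V) x :
  \sum_(eta' : econf E) rate_off src tgt p eta s eta' (flip s x) =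
  (1 - p) ^+ #|[set e | incident src tgt x e & delta src tgt s e]|.
Proof.
pose f e (b : bool) : R := if b then (if delta src tgt s e then 0 else p) else 1 - p.
pose g e (b : bool) : R := if incident src tgt x e then f e b else (b == eta e)%:R.
transitivity (\sum_(eta' : {ffun E -> bool}) \prod_e g e (eta' e)).
  apply: eq_bigr => eta' _; rewrite rate_off_flip.
  rewrite (bigID (incident src tgt x)) /=.
  rewrite [X in _ * X](eq_bigr (fun e => ((eta' e == eta e) : bool)%:R)); last first.
    by move=> e /negbTE; rewrite /g => ->.
  rewrite prod_ind -/(agree x eta eta').
  case: (agree x eta eta'); last by rewrite mulr0.
  rewrite mulr1.
  rewrite (eq_bigr (fun e => (if eta' e then p else 1 - p) *
        ((~~ (eta' e && delta src tgt s e)) : bool)%:R)); last first.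
    move=> e He; rewrite /g He /f.
    by case: (eta' e); case: (delta src tgt s e); rewrite /= ?mulr1 ?mulr0.
  rewrite big_split /= prod_ind /W; congr (_ * _%:R); last first.
    rewrite /inC; f_equal; apply/idP/idP => /forallP H; apply/forallP => e; have := H e;
    case He: (incident src tgt x e) => //=;
    by rewrite delta_flip //; case: (eta' e); case: (delta src tgt s e).
  symmetry; rewrite (bigID (fun e => eta' e)) /=.
  rewrite (eq_bigr (fun _ => p)); last by move=> e /andP[_ ->].
  rewrite [X in _ * X](eq_bigr (fun _ => 1 - p)); last by move=> e /andP[_ /negbTE ->].
  rewrite (eq_bigl (fun e => e \in [set e | incident src tgt x e & eta' e])); last first.
    by move=> e; rewrite inE.
  rewrite [X in _ * X](eq_bigl (fun e => e \in [set e | incident src tgt x e & ~~ eta' e])); last first.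
    by move=> e; rewrite inE.
  by rewrite !prodr_const mulrC.
rewrite -bigA_distr_bigA /=.
rewrite (eq_bigr (fun e => if incident src tgt x e && delta src tgt s e then 1 - p else 1)); last first.
  move=> e _; rewrite big_bool /g /f.
  case: (incident src tgt x e); case: (delta src tgt s e); case: (eta e) => /=;
    rewrite ?add0r ?addr0 ?subrKC ?addrNK //.
rewrite -big_mkcond.
rewrite (eq_bigl (fun e => e \in [set e | incident src tgt x e & delta src tgt s e])); last first.
  by move=> e; rewrite inE.
by rewrite prodr_const.
Qed.

End Proof.

Theorem proposition5 (R : realFieldType) (V E : finType) (src tgt : E -> V)
  (no_loops : forall e : E, src e != tgt e)
  (p : R) (hp : 0 <= p <= 1)
  (eta : econf E) (s s' : sconf V) :
  \sum_(eta' : econf E) rate src tgt p (eta, s) (eta', s') = cspin src tgt p s s'.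
Proof.
rewrite /cspin; case: pickP => [x /eqP -> | Hn].
  rewrite -(@L R V E src tgt no_loops p eta s x); apply: eq_bigr => eta' _.
  by rewrite /rate xpair_eqE flip_neq andbF.
case: eqVneq => [-> | Hne]; last first.
  apply: big1 => eta' _; rewrite /rate xpair_eqE (negbTE Hne) andbF /=.
  by apply: rate_off_nonflip => x; rewrite Hn.
rewrite (bigD1 eta) //= [X in _ + X]big1 ?addr0; last first.
  move=> eta' /negbTE Hne; rewrite /rate xpair_eqE Hne /=.
  by apply: rate_off_nonflip => x; rewrite eq_sym flip_neq.
rewrite /rate eqxx /=.
congr (- _).
have Hs : forall x, s != flip s x by move=> x; rewrite eq_sym flip_neq.
have -> : \sum_(st : econf E * sconf V | st != (eta, s)) rate_off src tgt p eta s st.1 st.2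
   = \sum_(st : econf E * sconf V) rate_off src tgt p eta s st.1 st.2.
  by rewrite [RHS](bigD1 (eta, s)) //= (@rate_off_nonflip R V E src tgt p eta s s eta Hs) add0r.
rewrite -(pair_big xpredT xpredT (fun a b => rate_off src tgt p eta s a b)) /=.
rewrite exchange_big /=.
rewrite (bigID (mem [set flip s x | x in [set: V]])) /=.
rewrite [X in _ + X]big1 ?addr0; last first.
  move=> s'' Hs''; apply: big1 => eta' _; apply: rate_off_nonflip => x.
  apply/eqP => Heq; move: Hs''; rewrite Heq imset_f // in_setT //.
rewrite big_imset /=; last by move=> x y _ _; apply: flip_inj.
apply: eq_big => [x|x _]; first by rewrite in_setT.
exact: (@L R V E src tgt no_loops).
Qed.
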